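(* Let $\theta$ be a perfect symmetric paperfolding morphism on $\{a,b,c,d\}$ and let $\mathcal{L}_\theta$ be the language generated by $\theta$. Then ${\rm S}^\oplus(\mathcal{L}_\theta)=\mathbb{Z}\times\mathbb{Z}$.
   Context: Let ${\rm S}^\oplus$ be the homomorphism from words over $\{a,b,c,d\}$ to $\mathbb{Z}\times\mathbb{Z}$ given by ${\rm S}^\oplus(a)=(1,0)$, ${\rm S}^\oplus(b)=(0,1)$, ${\rm S}^\oplus(c)=(-1,0)$, ${\rm S}^\oplus(d)=(0,-1)$ and ${\rm S}^\oplus(w_1\cdots w_n)=\sum_i{\rm S}^\oplus(w_i)$. The language $\mathcal{L}_\theta$ generated by a morphism $\theta$ is the set of all nonempty finite words occurring as factors of $\theta^n(x)$ for some $n\ge0$ and some letter $x$. Let $\sigma$ be the rotation morphism $\sigma(a)=b$, $\sigma(b)=c$, $\sigma(c)=d$, $\sigma(d)=a$, and $\tau$ the reversal anti-morphism $\tau(w_1\cdots w_n)=w_n\cdots w_1$. A morphism $\theta$ on $\{a,b,c,d\}$ is a paperfolding morphism if (1) $\sigma\tau\theta=\theta$ and (2) in the word $\theta(a)$ letters from $\{a,c\}$ alternate with letters from $\{b,d\}$. It is symmetric if $\sigma\theta=\theta\sigma$ (equivalently, $\theta(a)$ is a palindrome). An infinite word $x=x_0x_1\cdots$ generates the walk $Z_0=(0,0)$, $Z_{n+1}=Z_n+{\rm S}^\oplus(x_n)$. A paperfolding morphism $\theta$ with $\theta(a)$ beginning with $a$ (and $|\theta(a)|\ge2$) is perfect if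 the four walks generated by the fixed point $x=\theta^\infty(a)$ and its rotations $\sigma(x),\sigma^2(x),\sigma^3(x)$ together visit every point of $\mathbb{Z}\times\mathbb{Z}$ other than the origin exactly twice, and the origin exactly four times. (Example: $\theta(a)=abcba$, $\theta(b)=bcdcb$, $\theta(c)=cdadc$, $\theta(d)=dabad$.) *)

(* Defs.v *)
From mathcomp Require Import all_boot all_order all_algebra.
Set Implicit Arguments. Unset Strict Implicit. Unset Printing Implicit Defensive.
Import GRing.Theory Num.Theory.

Inductive letter := A | B | C | D.

Definition sigma (l : letter) : letter :=
  match l with A => B | B => C | C => D | D => A end.

Definition morph := letter -> seq letter.

Definition applyw (th : morph) (w : seq letter) : seq letter :=
  flatten (map th w).

Definition iterw (th : morph) (n : nat) (w : seq letter) : seq letter :=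
  iter n (applyw th) w.

Definition Svec (l : letter) : int * int :=
  match l with
  | A => (Posz 1, Posz 0) | B => (Posz 0, Posz 1)
  | C => (Negz 0, Posz 0) | D => (Posz 0, Negz 0)
  end.

Definition Sw (w : seq letter) : int * int :=
  foldr (fun l acc => ((Svec l).1 + acc.1, (Svec l).2 + acc.2)%R) (Posz 0, Posz 0) w.

Definition in_lang (th : morph) (w : seq letter) : Prop :=
  w <> [::] /\
  exists (n : nat) (x : letter) (u v : seq letter), iterw th n [:: x] = u ++ w ++ v.

Definition isAC (l : letter) : bool := match l with A | C => true | _ => false end.

(* paperfolding morphism:
   (1) sigma tau theta = theta sigma (on letters: theta(sigma x) = sigma(rev(theta x)))
   (2) in theta(a), letters from {a,c} alternate with letters from {b,d} *)
Definition paperfolding (th : morph) : Prop :=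
  (forall x : letter, th (sigma x) = map sigma (rev (th x))) /\
  (forall i : nat, i.+1 < size (th A) ->
     isAC (nth A (th A) i) != isAC (nth A (th A) i.+1)).

Definition symmetric_pf (th : morph) : Prop :=
  forall x : letter, map sigma (th x) = th (sigma x).

(* the fixed point theta^infty(a): its k-th letter is the k-th letter of
   theta^(k+1)(a) (well defined when theta(a) = a u, u nonempty, and all images
   are nonempty, which holds for paperfolding morphisms) *)
Definition fixpt (th : morph) (k : nat) : letter :=
  nth A (iterw th k.+1 [:: A]) k.

Definition walk (th : morph) (j n : nat) : int * int :=
  Sw (map (iter j sigma) (mkseq (fixpt th) n)).

(* perfect paperfolding morphism: theta(a) begins with a, |theta(a)| >= 2, and
   the four walks together visit each point other than the origin exactly twice
   and the origin exactly four times (visits counted as pairs (walk index, time)) *)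
Definition perfect (th : morph) : Prop :=
  paperfolding th /\
  (exists u : seq letter, th A = A :: u /\ u <> [::]) /\
  (forall p : int * int,
     exists s : seq (nat * nat),
       uniq s /\ size s = (if p == (Posz 0, Posz 0) then 4 else 2) /\
       forall j n : nat, (j < 4 /\ walk th j n = p) <-> (j, n) \in s).

(* Main.v *)
Require Import Defs.
From mathcomp Require Import all_boot all_order all_algebra.
From mathcomp Require Import zify ring lra.
From Stdlib Require Import Classical.
Set Implicit Arguments. Unset Strict Implicit. Unset Printing Implicit Defensive.
Import GRing.Theory Num.Theory.

Definition pt := (int * int)%type.
Definition padd (p q : pt) : pt := ((p.1 + q.1)%R, (p.2 + q.2)%R).
Definition rt (p : pt) : pt := ((- p.2)%R, p.1).

Lemma padd0r p : padd (Posz 0, Posz 0) p = p.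
Proof. by case: p => x y; rewrite /padd /= !add0r. Qed.

Lemma Sw_cat u v : Sw (u ++ v) = padd (Sw u) (Sw v).
Proof.
elim: u => [|l u IH] /=; first by rewrite padd0r.
by rewrite IH /padd /= !addrA.
Qed.

Lemma Sw_cons l w : Sw (l :: w) = padd (Svec l) (Sw w).
Proof. by []. Qed.

Lemma Sw_rev w : Sw (rev w) = Sw w.
Proof.
elim: w => [|l w IH] //=.
rewrite rev_cons -cats1 Sw_cat IH /padd /= !addr0.
by rewrite [X in (X, _)]addrC [X in (_, X)]addrC.
Qed.

Lemma Svec_sigma l : Svec (sigma l) = rt (Svec l).
Proof. by case: l. Qed.

Lemma rt_padd p q : rt (padd p q) = padd (rt p) (rt q).
Proof. by rewrite /rt /padd /= opprD. Qed.

Lemma Sw_map_sigma w : Sw (map sigma w) = rt (Sw w).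
Proof.
elim: w => [|l w IH] /=; first by rewrite /rt /= oppr0.
rewrite -/(Sw (map sigma w)) IH.
change (padd (Svec (sigma l)) (rt (Sw w)) = rt (padd (Svec l) (Sw w))).
by rewrite Svec_sigma rt_padd.
Qed.

Lemma Sw_map_iter j w : Sw (map (iter j sigma) w) = iter j rt (Sw w).
Proof.
elim: j => [|j IH] /=; first by rewrite map_id.
rewrite -IH -Sw_map_sigma -map_comp.
by congr Sw; apply: eq_map.
Qed.

Lemma rt4 p : rt (rt (rt (rt p))) = p.
Proof. by case: p => x y; rewrite /rt /= !opprK. Qed.

Lemma rt_inj : injective rt.
Proof. move=> p q /(congr1 (fun x => rt (rt (rt x)))); by rewrite !rt4. Qed.

Lemma iter_rt_inj j : injective (iter j rt).
Proof. elim: j => [|j IH] //= p q /rt_inj; exact: IH. Qed.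

Lemma applyw_cat th u v : applyw th (u ++ v) = applyw th u ++ applyw th v.
Proof. by rewrite /applyw map_cat flatten_cat. Qed.

Lemma iterw_cat th K u v : iterw th K (u ++ v) = iterw th K u ++ iterw th K v.
Proof. elim: K => [|K IH] //=; by rewrite /iterw /= -!/(iterw _ _ _) IH applyw_cat. Qed.

Lemma iterwSr th K w : iterw th K.+1 w = iterw th K (applyw th w).
Proof. by rewrite /iterw iterSr. Qed.

Lemma sigma_inj : injective sigma.
Proof. by case; case. Qed.

Lemma applyw_map_sigma th : symmetric_pf th ->
  forall w, applyw th (map sigma w) = map sigma (applyw th w).
Proof.
move=> sym; elim=> [|x w IH] //=.
by rewrite /applyw /= -!/(applyw _ _) IH map_cat sym.
Qed.

Lemma iterw_map_sigma th : symmetric_pf th ->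
  forall K w, iterw th K (map sigma w) = map sigma (iterw th K w).
Proof.
move=> sym; elim=> [|K IH] w //=.
by rewrite /iterw /= -!/(iterw _ _ _) IH applyw_map_sigma.
Qed.

Lemma iterw_map_iter th : symmetric_pf th ->
  forall j K w, iterw th K (map (iter j sigma) w) = map (iter j sigma) (iterw th K w).
Proof.
move=> sym; elim=> [|j IH] K w /=; first by rewrite !map_id.
have -> : map (fun x => sigma (iter j sigma x)) w = map sigma (map (iter j sigma) w).
  by rewrite -map_comp.
rewrite iterw_map_sigma // IH -map_comp; by apply: eq_map.
Qed.

Lemma th_pal th : paperfolding th -> symmetric_pf th -> forall x, rev (th x) = th x.
Proof.
move=> [pf _] sym x; apply: (inj_map sigma_inj).
by rewrite sym pf.
Qed.

Lemma applyw_rev th : (forall x, rev (th x) = th x) ->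
  forall w, applyw th (rev w) = rev (applyw th w).
Proof.
move=> hp; elim=> [|x w IH] //=.
rewrite rev_cons -cats1 applyw_cat IH /applyw /= -/(applyw th w) cats0.
by rewrite rev_cat hp.
Qed.

Definition T th K := iterw th K [:: A].

Lemma T_pal th : paperfolding th -> symmetric_pf th -> forall K, rev (T th K) = T th K.
Proof.
move=> pf sym; elim=> [|K IH] //=.
rewrite /T /iterw /= -/(iterw th K [:: A]) -/(T th K).
by rewrite -applyw_rev ?IH //; apply: th_pal.
Qed.

Lemma size_th th : paperfolding th -> forall x, size (th x) = size (th A).
Proof.
move=> [pf _] x.
have hs : forall y, size (th (sigma y)) = size (th y) by move=> y; rewrite pf size_map size_rev.
case: x => //.
- by rewrite -[B]/(sigma A) hs.
- by rewrite -[C]/(sigma (sigma A)) !hs.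
- by rewrite -[D]/(sigma (sigma (sigma A))) !hs.
Qed.

Lemma size_applyw th : paperfolding th -> forall w, size (applyw th w) = size w * size (th A).
Proof.
move=> pf; elim=> [|x w IH] //=.
by rewrite /applyw /= size_cat -/(applyw th w) IH size_th // mulSn.
Qed.

Lemma size_T th : paperfolding th -> forall K, size (T th K) = size (th A) ^ K.
Proof.
move=> pf; elim=> [|K IH] //.
by rewrite /T /iterw /= -/(iterw th K [:: A]) size_applyw // -/(T th K) IH expnSr.
Qed.

Definition Zw th t := Sw (mkseq (fixpt th) t).

Lemma T_S th K : T th K.+1 = applyw th (T th K).
Proof. by []. Qed.

Lemma T_succ th u : th A = A :: u -> forall K, exists r, T th K.+1 = T th K ++ r.
Proof.
move=> hA; elim=> [|K [r IH]].
  by exists u; rewrite /T /iterw /= /applyw /= cats0 hA.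
exists (applyw th r).
by rewrite [LHS]T_S IH applyw_cat -IH.
Qed.

Lemma T_prefix th u : th A = A :: u -> forall K m, exists r, T th (K + m) = T th K ++ r.
Proof.
move=> hA K; elim=> [|m [r IH]]; first by exists [::]; rewrite addn0 cats0.
rewrite addnS; have [r' ->] := T_succ hA (K + m).
by exists (r ++ r'); rewrite IH catA.
Qed.

Lemma size_T_gt th u : paperfolding th -> th A = A :: u -> u <> [::] ->
  forall K, K < size (T th K).
Proof.
move=> pf hA hu K; rewrite size_T // hA /=.
apply: ltn_expl; by case: u hA hu.
Qed.

Lemma nth_T th u : th A = A :: u -> forall M1 M2 k, M1 <= M2 -> k < size (T th M1) ->
  nth A (T th M1) k = nth A (T th M2) k.
Proof.
move=> hA M1 M2 k hM hk.
rewrite -(subnKC hM).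
have [r ->] := T_prefix hA M1 (M2 - M1).
by rewrite nth_cat hk.
Qed.

Lemma mkseq_T th u : paperfolding th -> th A = A :: u -> u <> [::] ->
  forall t M, t <= M -> mkseq (fixpt th) t = take t (T th M).
Proof.
move=> pf hA hu t M htM.
have hsz := size_T_gt pf hA hu.
apply: (@eq_from_nth _ A).
  have h := hsz M.
  have ht : t < size (T th M) by lia.
  by rewrite size_mkseq size_take ht.
move=> k; rewrite size_mkseq => hk.
rewrite nth_mkseq // nth_take // /fixpt.
change (nth A (T th k.+1) k = nth A (T th M) k).
apply: (nth_T hA); first lia.
have := hsz k.+1; lia.
Qed.

Lemma Zw_T th u : paperfolding th -> th A = A :: u -> u <> [::] ->
  forall t M, t <= M -> Zw th t = Sw (take t (T th M)).
Proof. by move=> pf hA hu t M h; rewrite /Zw (mkseq_T pf hA hu h). Qed.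

Lemma Sw1 x : Sw [:: x] = Svec x.
Proof. by rewrite /Sw /= !addr0; case: (Svec x). Qed.

Lemma ZwS th t : Zw th t.+1 = padd (Zw th t) (Svec (fixpt th t)).
Proof. by rewrite /Zw mkseqS -cats1 Sw_cat Sw1. Qed.

Lemma Zw0 th : Zw th 0 = (Posz 0, Posz 0).
Proof. by []. Qed.

Lemma fixpt0 th u : th A = A :: u -> fixpt th 0 = A.
Proof. by move=> hA; rewrite /fixpt /iterw /= /applyw /= cats0 hA. Qed.

Lemma Zw1 th u : th A = A :: u -> Zw th 1 = (Posz 1, Posz 0).
Proof. by move=> hA; rewrite ZwS Zw0 (fixpt0 hA) padd0r. Qed.

Lemma walk_Zw th j n : walk th j n = iter j rt (Zw th n).
Proof. by rewrite /walk Sw_map_iter. Qed.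

Lemma padd_cancel p q : padd p q = p -> q = (Posz 0, Posz 0).
Proof. case: p q => [x y] [a b]; rewrite /padd /= => -[h1 h2]; congr pair; lia. Qed.

Definition zero_word th := exists w, in_lang th w /\ Sw w = (Posz 0, Posz 0).

Lemma zero_of_eq th u : paperfolding th -> th A = A :: u -> u <> [::] ->
  forall t t', t < t' -> Zw th t = Zw th t' -> zero_word th.
Proof.
move=> pf hA hu t t' htt' heq.
have hsz := size_T_gt pf hA hu t'.
exists (drop t (take t' (T th t'))); split; last first.
  have h1 : Zw th t' = Sw (take t' (T th t')) by apply: (Zw_T pf hA hu).
  have h2 : Zw th t = Sw (take t (T th t')) by apply: (Zw_T pf hA hu); lia.
  apply: (@padd_cancel (Zw th t)).
  rewrite h2 -Sw_cat -(take_takel _ (ltnW htt')) cat_take_drop -h1 -heq.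
  by rewrite (take_takel _ (ltnW htt')).
split.
  move=> h; have := congr1 size h; rewrite size_drop size_take.
  case: ifP => _ /=; lia.
exists t', A, (take t (T th t')), (drop t' (T th t')).
rewrite catA -(take_takel (T th t') (ltnW htt')) cat_take_drop.
by rewrite cat_take_drop.
Qed.

Lemma second_letter th u : paperfolding th -> th A = A :: u -> u <> [::] ->
  exists e rest, (e = 1 \/ e = 3)%N /\ th A = A :: iter e sigma A :: rest.
Proof.
move=> [_ alt] hA hu.
case: u hA hu => [|y rest] hA hu //.
have := alt 0%N; rewrite hA /= => /(_ isT).
case: y hA hu => //= hA _ _.
- by exists 1%N, rest; split; [left|].
- by exists 3%N, rest; split; [right|].
Qed.

Lemma boundary th e rest : paperfolding th -> symmetric_pf th ->
  th A = A :: iter e sigma A :: rest ->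
  forall t t', (0 < t + t')%N -> padd (Zw th t) (iter e rt (Zw th t')) = (Posz 0, Posz 0) ->
  zero_word th.
Proof.
move=> pf sym hA t t' hpos hsum.
have hu : (iter e sigma A :: rest) <> [::] by [].
set K := (t + t')%N.
have hsz := size_T_gt pf hA hu K.
set N := size (T th K).
have hTK : T th K.+1 = T th K ++ map (iter e sigma) (T th K) ++ iterw th K rest.
  rewrite /T iterwSr /applyw /= cats0 hA.
  rewrite (_ : [:: A, iter e sigma A & rest] = [:: A] ++ map (iter e sigma) [:: A] ++ rest) //.
  by rewrite !iterw_cat iterw_map_iter.
set w := drop (N - t) (T th K) ++ take t' (map (iter e sigma) (T th K)).
exists w; split.
  split.
    move=> h; have := congr1 size h; rewrite size_cat size_drop size_take size_map.
    rewrite -/N; case: ifP => _ /=; lia.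
  exists K.+1, A, (take (N - t) (T th K)), (drop t' (map (iter e sigma) (T th K)) ++ iterw th K rest).
  rewrite -/(T th K.+1) hTK /w.
  set P := T th K; set M := map (iter e sigma) P.
  rewrite -{1}(cat_take_drop (N - t) P) -{1}(cat_take_drop t' M).
  by rewrite !catA.
rewrite /w Sw_cat -hsum; congr padd.
  rewrite -{1}(T_pal pf sym K) drop_rev Sw_rev -/N.
  have -> : (N - (N - t) = t)%N by lia.
  by rewrite (Zw_T pf hA hu (t:=t) (M:=K)) //; lia.
rewrite -map_take Sw_map_iter.
by rewrite (Zw_T pf hA hu (t:=t') (M:=K)) //; lia.
Qed.

Lemma ninety th u : paperfolding th -> symmetric_pf th -> th A = A :: u -> u <> [::] ->
  forall t v, (0 < t + v)%N -> Zw th t = rt (Zw th v) -> zero_word th.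
Proof.
move=> pf sym hA hu t v hpos heq.
have [e [rest [he hA']]] := second_letter pf hA hu.
case: he => he; subst e.
- apply: (boundary pf sym hA' (t:=v) (t':=t)); first lia.
  rewrite /= heq; case: (Zw th v) => x y; rewrite /rt /padd /=; congr pair; lia.
- apply: (boundary pf sym hA' (t:=t) (t':=v)); first lia.
  rewrite /= heq; case: (Zw th v) => x y; rewrite /rt /padd /=; congr pair; lia.
Qed.

Local Open Scope ring_scope.

Definition isunit (a b : pt) : Prop :=
  b = (a.1 + 1, a.2) \/ b = (a.1 - 1, a.2) \/ b = (a.1, a.2 + 1) \/ b = (a.1, a.2 - 1).

Definition phi (q a : pt) : int := if (a.1 <= q.1) && (q.2 < a.2) then 1 else 0.

Definition hc (q a b : pt) : int :=
  if (a.2 == b.2) && (q.2 < a.2) then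
    (if (a.1 == q.1) && (b.1 == q.1 + 1) then 1
     else if (b.1 == q.1) && (a.1 == q.1 + 1) then -1 else 0)
  else 0.

Definition vc (q a b : pt) : int :=
  if (a.1 == b.1) && (a.1 <= q.1) then
    (if (a.2 == q.2) && (b.2 == q.2 + 1) then 1
     else if (b.2 == q.2) && (a.2 == q.2 + 1) then -1 else 0)
  else 0.

Ltac crush := repeat (case: ifP => /= ?); lia.

Lemma edge_id q a b : isunit a b -> phi q b - phi q a = vc q a b - hc q a b.
Proof.
case: q a => [qx qy] [ax ay].
rewrite /isunit /phi /vc /hc /=.
case=> [->|[->|[->|->]]] /=; crush.
Qed.

Lemma hc_vert a x y : isunit x y -> x <> (a.1, a.2 + 1) -> y <> (a.1, a.2 + 1) ->
  hc a x y = hc (a.1, a.2 + 1) x y.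
Proof.
case: a x => [qx qy] [ax ay] /= hu hx hy.
have hx' : ~ (ax = qx /\ ay = qy + 1) by case=> h1 h2; apply: hx; rewrite h1 h2.
case: hu => [->|[->|[->|->]]] /= in hy *; rewrite /hc /=.
- have hy' : ~ (ax + 1 = qx /\ ay = qy + 1) by case=> h1 h2; apply: hy; rewrite h1 h2.
  crush.
- have hy' : ~ (ax - 1 = qx /\ ay = qy + 1) by case=> h1 h2; apply: hy; rewrite h1 h2.
  crush.
- crush.
- crush.
Qed.

Lemma vc_horiz a x y : isunit x y -> x <> (a.1 + 1, a.2) -> y <> (a.1 + 1, a.2) ->
  vc a x y = vc (a.1 + 1, a.2) x y.
Proof.
case: a x => [qx qy] [ax ay] /= hu hx hy.
have hx' : ~ (ax = qx + 1 /\ ay = qy) by case=> h1 h2; apply: hx; rewrite h1 h2.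
case: hu => [->|[->|[->|->]]] /= in hy *; rewrite /vc /=.
- crush.
- crush.
- have hy' : ~ (ax = qx + 1 /\ ay + 1 = qy) by case=> h1 h2; apply: hy; rewrite h1 h2.
  crush.
- have hy' : ~ (ax = qx + 1 /\ ay - 1 = qy) by case=> h1 h2; apply: hy; rewrite h1 h2.
  crush.
Qed.

Lemma hc_origin x y : isunit x y -> x <> (0, 0) -> y <> (0, 0) -> x <> (0, 1) -> y <> (0, 1) ->
  hc (0, -1) x y = hc (0, 1) x y.
Proof.
case: x => [ax ay] hu h1 h2 h3 h4.
have h1' : ~ (ax = 0 /\ ay = 0) by case=> e1 e2; apply: h1; rewrite e1 e2.
have h3' : ~ (ax = 0 /\ ay = 1) by case=> e1 e2; apply: h3; rewrite e1 e2.
case: hu => [->|[->|[->|->]]] /= in h2 h4 *; rewrite /hc /=.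
- have h2' : ~ (ax + 1 = 0 /\ ay = 0) by case=> e1 e2; apply: h2; rewrite e1 e2.
  have h4' : ~ (ax + 1 = 0 /\ ay = 1) by case=> e1 e2; apply: h4; rewrite e1 e2.
  crush.
- have h2' : ~ (ax - 1 = 0 /\ ay = 0) by case=> e1 e2; apply: h2; rewrite e1 e2.
  have h4' : ~ (ax - 1 = 0 /\ ay = 1) by case=> e1 e2; apply: h4; rewrite e1 e2.
  crush.
- crush.
- crush.
Qed.


Definition Wd (P : nat -> pt) (s : nat) (q : pt) : int :=
  \sum_(0 <= k < s) hc q (P k) (P k.+1) + hc q (P s) (P 0%N).
Definition Vd (P : nat -> pt) (s : nat) (q : pt) : int :=
  \sum_(0 <= k < s) vc q (P k) (P k.+1) + vc q (P s) (P 0%N).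

Definition closed_walk (P : nat -> pt) (s : nat) :=
  (forall k, (k < s)%N -> isunit (P k) (P k.+1)) /\ isunit (P s) (P 0%N).

Lemma Wd_Vd P s q : closed_walk P s -> Wd P s q = Vd P s q.
Proof.
move=> [hu hc0].
apply/eqP; rewrite -subr_eq0; apply/eqP.
rewrite /Vd /Wd opprD addrACA -sumrB.
rewrite (telescope_sumr_eq (fun k => - phi q (P k))) //.
  have e := edge_id q hc0.
  have -> : hc q (P s) (P 0%N) - vc q (P s) (P 0%N) = - (phi q (P 0%N) - phi q (P s)) by rewrite e; ring.
  ring.
move=> k /andP [_ hk]; have e := edge_id q (hu k hk).
have -> : hc q (P k) (P k.+1) - vc q (P k) (P k.+1) = - (phi q (P k.+1) - phi q (P k)) by rewrite e; ring.
ring.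
Qed.

Lemma Wd_up P s a : (forall k, (k <= s)%N -> P k <> (a.1, a.2 + 1)) ->
  closed_walk P s -> Wd P s a = Wd P s (a.1, a.2 + 1).
Proof.
move=> hn [hu hc0]; rewrite /Wd; congr (_ + _).
  apply: eq_big_nat => k /andP [_ hk]; apply: hc_vert; [exact: hu| |]; apply: hn; lia.
by apply: hc_vert => //; apply: hn.
Qed.

Lemma Wd_right P s a : (forall k, (k <= s)%N -> P k <> (a.1 + 1, a.2)) ->
  closed_walk P s -> Wd P s a = Wd P s (a.1 + 1, a.2).
Proof.
move=> hn hw; rewrite !Wd_Vd //; case: hw => hu hc0; rewrite /Vd; congr (_ + _).
  apply: eq_big_nat => k /andP [_ hk]; apply: vc_horiz; [exact: hu| |]; apply: hn; lia.
by apply: vc_horiz => //; apply: hn.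
Qed.

Lemma Wd_step P s a b : closed_walk P s -> isunit a b ->
  (forall k, (k <= s)%N -> P k <> a) -> (forall k, (k <= s)%N -> P k <> b) ->
  Wd P s a = Wd P s b.
Proof.
move=> hw hab ha hb.
case: hab => [hb'|[hb'|[hb'|hb']]].
- by rewrite hb' -Wd_right // -hb'.
- have ea : a = (b.1 + 1, b.2) by rewrite hb' /=; case: a {ha hb hb'} => x y /=; congr pair; ring.
  by rewrite ea -Wd_right // -ea.
- by rewrite hb' -Wd_up // -hb'.
- have ea : a = (b.1, b.2 + 1) by rewrite hb' /=; case: a {ha hb hb'} => x y /=; congr pair; ring.
  by rewrite ea -Wd_up // -ea.
Qed.

Lemma hc_zero q a b : a.1 <> q.1 -> b.1 <> q.1 -> hc q a b = 0.
Proof. case: q a b => [qx qy] [ax ay] [bx by'] /= h1 h2; rewrite /hc /=; crush. Qed.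

Lemma vc_zero q a b : a.2 <> q.2 -> b.2 <> q.2 -> vc q a b = 0.
Proof. case: q a b => [qx qy] [ax ay] [bx by'] /= h1 h2; rewrite /vc /=; crush. Qed.

Lemma Wd_bound P s q : closed_walk P s -> Wd P s q <> 0 ->
  (exists2 k, (k <= s)%N & (P k).1 = q.1) /\ (exists2 k, (k <= s)%N & (P k).2 = q.2).
Proof.
move=> hw hne; split; apply: NNPP => hn; apply: hne.
- have hn' : forall k, (k <= s)%N -> (P k).1 <> q.1 by move=> k hk he; apply: hn; exists k.
  rewrite /Wd big1_seq ?add0r; first by apply: hc_zero; apply: hn'.
  move=> k; rewrite mem_index_iota => /andP [_ hk]; apply: hc_zero; apply: hn'; lia.
- have hn' : forall k, (k <= s)%N -> (P k).2 <> q.2 by move=> k hk he; apply: hn; exists k.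
  rewrite Wd_Vd // /Vd big1_seq ?add0r; first by apply: vc_zero; apply: hn'.
  move=> k; rewrite mem_index_iota => /andP [_ hk]; apply: vc_zero; apply: hn'; lia.
Qed.

Lemma Wd_origin P s : closed_walk P s -> (1 <= s)%N ->
  P 0%N = (0, 0) -> P 1%N = (1, 0) -> P s = (-1, 0) ->
  (forall k, (1 <= k <= s)%N -> P k <> (0, 0) /\ P k <> (0, 1)) ->
  Wd P s (0, -1) = Wd P s (0, 1) + 1.
Proof.
case: s => [//|s] [hu hc0] _ h0 h1 hs' hn.
rewrite /Wd big_nat_recl // big_nat_recl // h0 h1 hs'.
have -> : \sum_(0 <= i < s) hc (0, -1) (P i.+1) (P i.+2) = \sum_(0 <= i < s) hc (0, 1) (P i.+1) (P i.+2).
  apply: eq_big_nat => k /andP [hk1 hk2].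
  have [n1 n2] : P k.+1 <> (0, 0) /\ P k.+1 <> (0, 1) by apply: hn; lia.
  have [n3 n4] : P k.+2 <> (0, 0) /\ P k.+2 <> (0, 1) by apply: hn; lia.
  by apply: hc_origin => //; apply: hu.
move: (\sum_(0 <= i < s) hc (0, 1) (P i.+1) (P i.+2)) => S.
rewrite /hc /=; ring.
Qed.

Lemma iter_rt_padd J p q : iter J rt (padd p q) = padd (iter J rt p) (iter J rt q).
Proof. elim: J => [|J IH] //=; by rewrite IH rt_padd. Qed.

Lemma Svec_iter J l : iter J rt (Svec l) = Svec (iter J sigma l).
Proof. elim: J => [|J IH] //=; by rewrite IH Svec_sigma. Qed.

Lemma isunit_Svec p l : isunit p (padd p (Svec l)).
Proof.
case: p => x y; rewrite /isunit /padd /=.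
case: l => /=.
- by left; rewrite ?addr0.
- by right; right; left; rewrite ?addr0.
- by right; left; rewrite ?addr0.
- by right; right; right; rewrite ?addr0.
Qed.

Lemma origin_case th u : paperfolding th -> symmetric_pf th -> th A = A :: u -> u <> [::] ->
  (forall p : int * int,
     exists s : seq (nat * nat),
       uniq s /\ size s = (if p == (Posz 0, Posz 0) then 4%N else 2%N) /\
       forall j n : nat, (j < 4 /\ walk th j n = p)%N <-> (j, n) \in s) ->
  zero_word th.
Proof.
move=> pf sym hA hu hcnt.
apply: NNPP => NZ.
have inj : forall t t', Zw th t = Zw th t' -> t = t'.
  move=> t t' h; case: (ltngtP t t') => // hlt.
  - by case: NZ; apply: (zero_of_eq pf hA hu hlt).
  - by case: NZ; apply: (zero_of_eq pf hA hu hlt).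
have n90 : forall t v, (0 < t + v)%N -> Zw th t <> rt (Zw th v).
  by move=> t v hp h; case: NZ; apply: (ninety pf sym hA hu hp h).
have Z1 := Zw1 hA.
have [sl [usl [szl hsl]]] := hcnt (Posz 1, Posz 0).
rewrite /= in szl.
have h01 : (0%N, 1%N) \in sl.
  by apply/hsl; split => //; rewrite walk_Zw /= Z1.
have [j [n [hjn hne]]] : exists j n, (j, n) \in sl /\ (j, n) <> (0%N, 1%N).
  case: sl usl szl hsl h01 => [|x1 [|x2 [|? ?]]] //= usl _ _ h01.
  rewrite inE andbT in usl.
  case: x1 usl h01 => j1 n1 usl h01.
  case: (eqVneq (j1, n1) (0%N, 1%N)) => h.
  - case: x2 usl h01 => j2 n2 usl h01; exists j2, n2; split; first by rewrite !inE eqxx orbT.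
    by move=> h2; rewrite h h2 eqxx in usl.
  - by exists j1, n1; split; [rewrite inE eqxx | apply/eqP].
have [hj hw] := (iffRL (hsl j n)) hjn.
rewrite walk_Zw in hw.
have hZn : Zw th n = (-1, 0).
  case: j hj hw hjn hne => [|[|[|[|j]]]] //= _ hw hjn hne.
  - by case: hne; congr pair; apply: inj; rewrite hw Z1.
  - exfalso; apply: (n90 1%N n); first lia.
    by rewrite Z1 -hw.
  - move: hw; case: (Zw th n) => x y; rewrite /rt /= => -[h1 h2]; congr pair; lia.
  - exfalso; apply: (n90 n 1%N); first lia.
    by rewrite Z1 -hw rt4.
have hn1 : (1 <= n)%N.
  case: n hZn {hjn hne hw} => // /(congr1 fst) /=; lia.
set P := Zw th.
have hcw : closed_walk P n.
  split; first by move=> k _; rewrite /P ZwS; apply: isunit_Svec.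
  by rewrite /P hZn Zw0; left.
have hnz : forall k, (1 <= k <= n)%N -> P k <> (0, 0) /\ P k <> (0, 1).
  move=> k hk; split.
  - move=> h; have := inj k 0%N; rewrite /P in h; rewrite h Zw0 => /(_ erefl); lia.
  - move=> h; apply: (n90 k 1%N); first lia.
    by rewrite /P in h; rewrite h Z1.
have hor := Wd_origin hcw hn1 (Zw0 th) Z1 hZn hnz.
have [J [hJ hW1]] : exists J, (J = 1 \/ J = 3)%N /\ Wd P n (iter J rt (Zw th 1)) <> 0.
  case: (eqVneq (Wd P n (0, 1)) 0) => h.
  - exists 3%N; split; first by right.
    have e3 : iter 3 rt (Posz 1, Posz 0) = (0, -1) by [].
    rewrite Z1 e3 hor h; lia.
  - by exists 1%N; split; [left | rewrite Z1; apply/eqP].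
set W := fun t => iter J rt (Zw th t).
have hav : forall t, (1 <= t)%N -> forall k, (k <= n)%N -> P k <> W t.
  move=> t ht k hk; rewrite /P /W => h.
  case: hJ => hJ; subst J.
  - by apply: (n90 k t) => //; lia.
  - apply: (n90 t k); first lia.
    by rewrite h /= rt4.
have hstep : forall t, isunit (W t) (W t.+1).
  by move=> t; rewrite /W ZwS iter_rt_padd Svec_iter; apply: isunit_Svec.
have hinv : forall t, (1 <= t)%N -> Wd P n (W t) = Wd P n (W 1%N).
  elim=> [//|t IH] ht.
  case: (eqVneq t 0%N) => [->//|t0].
  rewrite -IH; last lia.
  symmetry; apply: (Wd_step hcw (hstep t)); apply: hav => //; lia.
set F := [seq (x, y) | x <- [seq (Zw th k).1 | k <- iota 0 n.+1],
                        y <- [seq (Zw th k).2 | k <- iota 0 n.+1]].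
have hF : forall t, (1 <= t)%N -> W t \in F.
  move=> t ht.
  have hne0 : Wd P n (W t) <> 0 by rewrite hinv.
  have [[k1 hk1 e1] [k2 hk2 e2]] := Wd_bound hcw hne0.
  rewrite [W t]surjective_pairing -e1 -e2.
  rewrite /P; apply: allpairs_f.
    by apply: (map_f (fun k => (Zw th k).1)); rewrite mem_iota; lia.
  by apply: (map_f (fun k => (Zw th k).2)); rewrite mem_iota; lia.
set L := [seq W t | t <- iota 1 (size F).+1].
have hu' : uniq L.
  rewrite map_inj_in_uniq ?iota_uniq //.
  by move=> t1 t2 _ _ /iter_rt_inj /inj.
have hsub : {subset L <= F}.
  move=> x /mapP [t]; rewrite mem_iota => /andP [ht _] ->; exact: hF.
have := uniq_leq_size hu' hsub.
by rewrite size_map size_iota ltnn.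
Qed.

Theorem proposition11 (th : morph) :
  perfect th -> symmetric_pf th ->
  forall p : int * int, exists w : seq letter, in_lang th w /\ Sw w = p.
Proof.
move=> [pf [[u [hA hu]] hcnt]] sym p.
case: (eqVneq p (Posz 0, Posz 0)) => hp.
  by rewrite hp; apply: (origin_case pf sym hA hu hcnt).
have [sl [_ [szl hsl]]] := hcnt p.
rewrite (negbTE hp) in szl.
case: sl szl hsl => [//|[j n] sl] _ hsl.
have [hj hw] := (iffRL (hsl j n)) (mem_head _ _).
exists (map (iter j sigma) (mkseq (fixpt th) n)); split; last by [].
have hn : (0 < n)%N.
  case: n hw {hsl} => // hw; rewrite /walk /= in hw.
  by move: hp; rewrite -hw eqxx.
split.
  by move=> h; have := congr1 size h; rewrite size_map size_mkseq /=; lia.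
exists n, (iter j sigma A), [::], (map (iter j sigma) (drop n (T th n))).
rewrite -[[:: iter j sigma A]]/(map (iter j sigma) [:: A]) iterw_map_iter //.
by rewrite (mkseq_T pf hA hu (leqnn n)) -map_cat cat_take_drop.
Qed.
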